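(* Let $K \ge 2$, $n \ge 1$, $\Sigma = \{1,\ldots,K\}^n$, and let $\Pr(\cdot \mid A)$ be a probability distribution on $\Sigma$ (the posterior of the labels given data $A$), invariant under relabelling, i.e. $\Pr(\phi(\sigma)\mid A) = \Pr(\sigma \mid A)$ for every permutation $\phi$ of $\{1,\ldots,K\}$, where $(\phi(\sigma))_i = \phi(\sigma_i)$. Let $\rho:\Sigma\to\Sigma$ be the canonical remapping and $\Pr^*(\cdot\mid A)$ the induced posterior on $\Sigma^* = \{\sigma \in \Sigma : \rho(\sigma) = \sigma\}$, i.e. $\Pr^*(\sigma \mid A) = \sum_{\sigma' \in \Sigma:\, \rho(\sigma') = \sigma} \Pr(\sigma' \mid A)$. Define the remapped centroid estimator \[ \hat\sigma_C = \rho\Big( \operatorname*{arg\,min}_{\tilde\sigma \in \Sigma} \mathbb{E}_{\sigma \mid A}\big[ H(\tilde\sigma, \rho(\sigma)) \big] \Big), \qquad H(\tilde\sigma,\sigma) = \sum_{i=1}^n I(\tilde\sigma_i \ne \sigma_i), \] and let $\hat\sigma^* \in \Sigma$ be given by $(\hat\sigma^* )_i = \operatorname*{arg\,max}_{k \in \{1,\ldots,K\}} \Pr^*(\sigma_i = k \mid A)$ for $i = 1,\ldots,n$. Then $\hat\sigma^*$ minimizes $\tilde\sigma \mapsto \mathbb{E}_{\sigma\mid A}[H(\tilde\sigma,\rho(\sigma))]$ over $\Sigma$, and hence $\hat\sigma_C = \rho(\hat\sigma^* )$ (the centroid estimator is a mapped consensus estimator).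
   Context: Canonical remapping: for $\sigma \in \Sigma$, $\rho(\sigma)$ is obtained by relabelling the labels in order of first appearance along $\sigma_1,\sigma_2,\ldots,\sigma_n$: the label of $\sigma_1$ becomes $1$, the next new label encountered becomes $2$, and so on (e.g. $\sigma=(2,2,3,1,3,4,2,1)$ maps to $(1,1,2,3,2,4,1,3)$). Formally, with $\mathrm{ind}(\sigma)_k = \min\{i:\sigma_i = k\}$ and $\mathrm{ord}(\sigma)_k = \sigma\big[\mathrm{ind}(\sigma)_{(k)}\big]$ (the $k$-th label to appear), $\rho(\sigma) = \mathrm{ord}(\sigma)^{-1}(\sigma)$. $\Pr^*(\sigma_i = k \mid A)$ denotes the marginal probability under $\Pr^*$. $I(\cdot)$ is the indicator function. *)

(* Defs.v *)
(* Labels {1..K} are represented by 'I_K = {0..K-1}. *)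
From mathcomp Require Import all_boot all_order all_algebra all_fingroup.
Set Implicit Arguments. Unset Strict Implicit. Unset Printing Implicit Defensive.
Import Order.TTheory GRing.Theory Num.Theory.
Local Open Scope ring_scope.

Definition labeling (n K : nat) := {ffun 'I_n -> 'I_K}.

Definition relabel n K (phi : {perm 'I_K}) (s : labeling n K) : labeling n K :=
  [ffun i => phi (s i)].

Definition appearance n K (s : labeling n K) : seq 'I_K :=
  undup [seq s i | i <- enum 'I_n].

(* canonical remapping: the label of s_i is replaced by its rank (0-based)
   in the order of first appearance.  The rank is always < K; the default
   in insubd is never used. *)
Definition rho n K (s : labeling n K) : labeling n K :=
  [ffun i => insubd (s i) (index (s i) (appearance s))].

Definition hamming n K (t s : labeling n K) : nat := #|[set i | t i != s i]|.

Definition Prstar (R : numDomainType) n K (P : labeling n K -> R)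
  (s : labeling n K) : R := \sum_(s' | rho s' == s) P s'.

Definition marg_star (R : numDomainType) n K (P : labeling n K -> R)
  (i : 'I_n) (k : 'I_K) : R :=
  \sum_(s | (rho s == s) && (s i == k)) Prstar P s.

Definition exp_loss (R : numDomainType) n K (P : labeling n K -> R)
  (t : labeling n K) : R :=
  \sum_(s : labeling n K) P s * (hamming t (rho s))%:R.

Definition argmin_loss (R : realDomainType) n K (P : labeling n K -> R)
  : {set labeling n K} :=
  [set t | [forall u, exp_loss P t <= exp_loss P u]].

(* Main.v *)
Require Import Defs.
From mathcomp Require Import all_boot all_order all_algebra all_fingroup.
Import Order.TTheory GRing.Theory Num.Theory.
Local Open Scope ring_scope.

Lemma undup_map_in (T1 T2 : eqType) (f : T1 -> T2) (l : seq T1) :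
  {in l &, injective f} -> undup (map f l) = map f (undup l).
Proof.
elim: l => [//|x l IH] inj /=.
have inj' : {in l &, injective f}.
  by move=> a b ha hb; apply: inj; rewrite inE ?ha ?hb orbT.
have -> : (f x \in map f l) = (x \in l).
  apply/mapP/idP => [[y hy hxy]|hx]; last by exists x.
  by rewrite (inj x y) ?inE ?eqxx ?hy ?orbT.
by case: ifP => _; rewrite /= IH.
Qed.

Lemma index_map_in (T1 T2 : eqType) (f : T1 -> T2) (u : seq T1) x :
  {in u &, injective f} -> x \in u -> (index (f x) (map f u) = index x u)%N.
Proof.
elim: u => [//|y u IH] inj /= hx.
have inj' : {in u &, injective f}.
  by move=> a b ha hb; apply: inj; rewrite inE ?ha ?hb orbT.
case: (eqVneq y x) => [->|nyx]; first by rewrite eqxx.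
have -> : (f y == f x) = false.
  apply/negbTE/eqP => h; move/eqP: nyx; apply.
  by apply: inj; rewrite // inE ?eqxx // hx.
by rewrite IH //; move: hx; rewrite inE eq_sym (negbTE nyx).
Qed.

Lemma rho_val n K (s : labeling n K) x : x \in appearance s ->
  val (insubd x (index x (appearance s)) : 'I_K) = index x (appearance s).
Proof.
move=> hx; rewrite val_insubd.
have h1 : (index x (appearance s) < size (appearance s))%N by rewrite index_mem.
have h2 : (size (appearance s) <= K)%N.
  rewrite -(card_uniqP (undup_uniq _)) -[X in (_ <= X)%N](card_ord K).
  exact: max_card.
by rewrite (leq_trans h1 h2).
Qed.

Lemma rho_idem n K (s : labeling n K) : rho (rho s) = rho s.
Proof.
set a := appearance s.
set g := fun x : 'I_K => (insubd x (index x a) : 'I_K).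
have ga : forall x, x \in a -> val (g x) = index x a.
  by move=> x hx; apply: rho_val.
have gin : {in a &, injective g}.
  move=> x y hx hy h; apply: (index_inj x hx hy).
  by rewrite -ga // -ga // h.
have memA : forall i, s i \in a.
  by move=> i; rewrite mem_undup; apply: map_f; rewrite mem_enum.
have rs : forall i, rho s i = g (s i) by move=> i; rewrite ffunE.
have app : appearance (rho s) = map g a.
  rewrite /appearance.
  have -> : [seq rho s i | i <- enum 'I_n] = map g [seq s i | i <- enum 'I_n].
    by rewrite -map_comp; apply: eq_map => i; rewrite rs.
  apply: undup_map_in => x y hx hy; apply: gin; by rewrite mem_undup.
apply/ffunP => i; apply: val_inj.
rewrite [in LHS]ffunE val_insubd app rs index_map_in // -ga // ltn_ord.
by [].
Qed.

Theorem theorem2 (R : realFieldType) (n K : nat) (hK : (2 <= K)%N) (hn : (1 <= n)%N)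
  (P : labeling n K -> R)
  (P_ge0 : forall s, 0 <= P s)
  (P_sum1 : \sum_(s : labeling n K) P s = 1)
  (P_inv : forall (phi : {perm 'I_K}) s, P (relabel phi s) = P s)
  (shat : labeling n K)
  (shat_argmax : forall (i : 'I_n) (k : 'I_K),
      marg_star P i k <= marg_star P i (shat i)) :
  (forall t : labeling n K, exp_loss P shat <= exp_loss P t)
  /\ rho shat \in [set rho t | t in argmin_loss P].
Proof.
pose m i k := \sum_(s | rho s i == k) P s.
have mE : forall i k, marg_star P i k = m i k.
  move=> i k; rewrite /marg_star /Prstar /m.
  rewrite [RHS](partition_big (fun s => rho s)
     (fun s : labeling n K => (rho s == s) && (s i == k))); last first.
    by move=> s hs; rewrite rho_idem eqxx hs.
  apply: eq_bigr => s /andP[_ /eqP sk]; apply: eq_bigl => s'.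
  by case: (eqVneq (rho s') s) => [->|]; rewrite ?andbT ?andbF // sk eqxx.
have hamE : forall t u : labeling n K,
    (hamming t u)%:R = \sum_i (1 - ((u i == t i)%:R : R)).
  move=> t u; rewrite /hamming -sum1_card natr_sum big_mkcond /=.
  apply: eq_bigr => i _; rewrite inE [u i == _]eq_sym.
  by case: (t i == u i); rewrite /= ?subrr ?subr0.
have lossE : forall t, exp_loss P t = \sum_i (1 - m i (t i)).
  move=> t; rewrite /exp_loss.
  under eq_bigr do rewrite hamE mulr_sumr.
  rewrite exchange_big /=; apply: eq_bigr => i _.
  under eq_bigr do rewrite mulrBr mulr1.
  rewrite sumrB P_sum1 /m; congr (_ - _); rewrite [RHS]big_mkcond /=.
  apply: eq_bigr => s _.
  by case: (rho s i == t i); rewrite /= ?mulr0 ?mulr1.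
have opt : forall t : labeling n K, exp_loss P shat <= exp_loss P t.
  move=> t; rewrite !lossE; apply: ler_sum => i _.
  by rewrite lerD2l lerN2 -!mE.
split => //.
apply/imsetP; exists shat => //.
by rewrite inE; apply/forallP => u; apply: opt.
Qed.
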